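(* Let $k_1,k_2$ be positive integers with $1\le k_1\le k_2$ and let $p$ be an odd prime with $p\equiv 1\pmod{k_1+k_2}$. Let $M=[-k_1,k_2]^\ast$, viewed as a subset of the multiplicative group $\mathbb{Z}_p^\ast$. Then $M$ is a direct factor of $\mathbb{Z}_p^\ast$ if and only if $M$ is a direct factor of the subgroup $H=\langle -1,2,\dots,k_2\rangle$ of $\mathbb{Z}_p^\ast$.
   Context: $\mathbb{Z}_p^\ast=\mathbb{Z}_p\setminus\{0\}$ is the multiplicative group of nonzero residues modulo the prime $p$; $[a,b]^\ast=\{a,a+1,\dots,b\}\setminus\{0\}$. $\langle -1,2,\dots,k_2\rangle$ is the subgroup of $\mathbb{Z}_p^\ast$ generated by $-1,2,\dots,k_2$. For a (multiplicative) abelian group $G$ and a nonempty subset $A\subseteq G$, $A$ is a direct factor of $G$ if there is a subset $C\subseteq G$ such that every element $g\in G$ can be written uniquely as $g=ac$ with $a\in A$, $c\in C$ (a factorization $G=AC$). *)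

(* Defs.v *)
From HB Require Import structures.
From mathcomp Require Import all_boot all_order all_algebra all_fingroup.
Set Implicit Arguments. Unset Strict Implicit. Unset Printing Implicit Defensive.
Import GRing.Theory.

Definition direct_factor (gT : finGroupType) (A G : {set gT}) : Prop :=
  A != set0 /\ A \subset G /\
  exists C : {set gT}, C \subset G /\
    forall g, g \in G ->
      exists! ac : gT * gT, [/\ ac.1 \in A, ac.2 \in C & g = (ac.1 * ac.2)%g].

Definition intervalM (p k1 k2 : nat) : {set {unit 'F_p}} :=
  [set u : {unit 'F_p} | [exists i : 'I_(k1 + k2).+1,
     (nat_of_ord i != k1) && (val u == ((i%:R - k1%:R)%R : 'F_p))]].

Definition gensH (p k2 : nat) : {set {unit 'F_p}} :=
  [set u : {unit 'F_p} | (val u == - 1 :> 'F_p)%R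
     || [exists i : 'I_k2.+1, (1 < i)%N && (val u == (i%:R : 'F_p)%R)]].

(* Main.v *)
Require Import Defs.
From HB Require Import structures.
From mathcomp Require Import all_boot all_order all_algebra all_fingroup.
From mathcomp Require Import zify.
Set Implicit Arguments. Unset Strict Implicit.

Lemma df_sub (gT : finGroupType) (A : {set gT}) (H : {group gT}) :
  A \subset H -> direct_factor A [set: gT] <-> direct_factor A H.
Proof.
move=> sAH; split.
- case=> [nA [_ [C [_ HC]]]]; split=> //; split=> //.
  exists (C :&: H); split; first exact: subsetIr.
  move=> g gH; have [[a c] [/= [aA cC e] uniq]] := HC g (in_setT g).
  subst g.
  exists (a, c); split.
    split=> //; rewrite inE cC /=.
    have -> : c = (a^-1 * (a * c))%g by rewrite mulKg.
    by apply: groupM => //; apply: groupVr; exact: (subsetP sAH).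
  move=> [a' c'] /= [a'A]; rewrite inE => /andP[c'C _] e.
  by apply: uniq; split.
- case=> [nA [_ [C' [sC' HC]]]]; split=> //; split; first exact: subsetT.
  pose rho x := repr (H :* x)%g.
  have rhoE x y : (y * x^-1 \in H)%g -> rho y = rho x.
    move=> yx; rewrite /rho.
    by have /rcoset_eqP -> : (y \in H :* x)%g by rewrite mem_rcoset.
  have rhoH x : (x * (rho x)^-1 \in H)%g.
    have := mem_repr_rcoset H x; rewrite mem_rcoset -/(rho x) => h.
        by rewrite -groupV invMg invgK.
  exists [set x | (x * (rho x)^-1 \in C')%g]; split; first exact: subsetT.
  move=> g _; have [[a c'] [/= [aA c'C e] uniq]] := HC _ (rhoH g).
  have rc : rho (c' * rho g)%g = rho g.
    apply: rhoE; rewrite -mulgA; apply: groupM; first exact: (subsetP sC'). by rewrite -groupV invMg invgK rhoH.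
  exists (a, (c' * rho g)%g); split.
    split=> //=; first by rewrite inE rc mulgK.
    by rewrite mulgA -e mulgKV.
  move=> [a2 c2] /= [a2A]; rewrite inE => c2C e2.
  have r2 : rho c2 = rho g.
    by apply: rhoE; rewrite e2 invMg mulgA mulgV mul1g groupV; exact: (subsetP sAH).
  rewrite r2 in c2C.
  have E : (a, c') = (a2, (c2 * (rho g)^-1)%g).
    by apply: uniq; split=> //=; rewrite e2 mulgA.
  case: E => <- ->; by rewrite mulgKV.
Qed.

Import GRing.Theory.
Local Open Scope ring_scope.

Lemma subM (k1 k2 p : nat) : (k1 <= k2)%N ->
  intervalM p k1 k2 \subset <<gensH p k2>>%g.
Proof.
move=> k12; apply/subsetP => u; rewrite inE => /existsP [i /andP [ik /eqP e]].
have ltik := ltn_ord i.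
have w1 : (-1 : 'F_p) \is a GRing.unit by rewrite unitrN1.
pose w : {unit 'F_p} := FinRing.Unit w1.
have wH : w \in <<gensH p k2>>%g by apply: mem_gen; rewrite inE eqxx.
case: (ltngtP i k1) ik => // hik _.
-
  set j := (k1 - i)%N.
  have ej : val u = - (j%:R) :> 'F_p by rewrite e /j natrB ?opprB // ltnW.
  have [j1|j2] := leqP j 1.
    have jj : j = 1%N by rewrite /j; lia.
    by apply: mem_gen; rewrite inE ej jj eqxx.
  have -> : u = (w^-1 * (w * u))%g by rewrite mulKg.
  apply: groupM; first by rewrite groupV.
  apply: mem_gen; rewrite inE; apply/orP; right; apply/existsP.
  have jk : (j < k2.+1)%N by rewrite /j; lia.
  exists (Ordinal jk); rewrite j2 /=; apply/eqP.
  by rewrite [FinRing.uval u]ej mulN1r opprK.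
- set j := (i - k1)%N.
  have ej : val u = j%:R :> 'F_p by rewrite e /j natrB // ltnW.
  have [j1|j2] := leqP j 1.
    have jj : j = 1%N by rewrite /j; lia.
    have -> : u = 1%g by apply: val_inj; rewrite ej jj FinRing.val_unit1.
    exact: group1.
  apply: mem_gen; rewrite inE; apply/orP; right; apply/existsP.
  have jk : (j < k2.+1)%N by rewrite /j; lia.
  by exists (Ordinal jk); rewrite j2 /= ej.
Qed.

Theorem theorem4p1 (k1 k2 p : nat) :
  (1 <= k1)%N -> (k1 <= k2)%N -> prime p -> odd p ->
  p = 1 %[mod k1 + k2] ->
  direct_factor (intervalM p k1 k2) [set: {unit 'F_p}] <->
  direct_factor (intervalM p k1 k2) <<gensH p k2>>%g.
Proof.
move=> _ k12 _ _ _.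
exact: (df_sub (H := <<gensH p k2>>%G) (subM p k12)).
Qed.
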